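(* Let $Q\in\mathbb{R}^{n\times n}$ be symmetric positive definite, $\|x\|=\sqrt{x^TQx}$, $\|u\|_*=\sqrt{u^TQ^{-1}u}$. Let $f\colon\mathbb{R}^n\to\mathbb{R}$ be convex and differentiable with $\|\nabla f(x)-\nabla f(y)\|_*\le L\|x-y\|$ for all $x,y$, with a minimizer $x_\star$, $f_\star=f(x_\star)$. Let $0<t\le1$, and let $\{\theta_k\}_{k=0}^\infty$ be positive with $\theta_0=1$ and $0\le\theta_{k+1}^2-\theta_{k+1}\le\theta_k^2$ for $k\ge0$. Given $x_0$, let $z_0=x_0$ and for $k\ge0$ \[ y_{k+1}=x_k-\tfrac1LQ^{-1}\nabla f(x_k),\quad z_{k+1}=z_k-\tfrac{2t\theta_k}{L}Q^{-1}\nabla f(x_k),\quad x_{k+1}=\Big(1-\tfrac1{\theta_{k+1}}\Big)y_{k+1}+\tfrac1{\theta_{k+1}}z_{k+1}. \] Then for $k=1,2,\dots$, \[ f(y_k)-f_\star\le\frac{L\|x_0-x_\star\|^2}{4t\theta_{k-1}^2}. \]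
   Context: For $t=1/2$ this is Nesterov's accelerated gradient method and for $t=1$ it is OGM (when $Q=I$). *)

(* Defs.v *)
From HB Require Import structures.
From mathcomp Require Import all_boot all_order all_algebra.
From mathcomp Require Import all_classical all_reals all_analysis.
Set Implicit Arguments. Unset Strict Implicit. Unset Printing Implicit Defensive.
Import Order.TTheory GRing.Theory Num.Theory.
Import numFieldNormedType.Exports.
Local Open Scope ring_scope.

Definition sym_posdef (R : realType) (n : nat) (Q : 'M[R]_n) : Prop :=
  Q^T = Q /\ forall x : 'cV[R]_n, x != 0 -> 0 < (x^T *m Q *m x) 0 0.

Definition qnorm (R : realType) (n : nat) (Q : 'M[R]_n) (x : 'cV[R]_n) : R :=
  Num.sqrt ((x^T *m Q *m x) 0 0).

Definition qdnorm (R : realType) (n : nat) (Q : 'M[R]_n) (u : 'cV[R]_n) : R :=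
  Num.sqrt ((u^T *m invmx Q *m u) 0 0).

Definition convex_fun (R : realType) (n : nat) (f : 'cV[R]_n -> R) : Prop :=
  forall (x y : 'cV[R]_n) (a : R), 0 <= a <= 1 ->
    f ((1 - a) *: x + a *: y) <= (1 - a) * f x + a * f y.

Definition grad (R : realType) (n : nat) (f : 'cV[R]_n -> R) (x : 'cV[R]_n)
  : 'cV[R]_n := \col_i ('D_(delta_mx i 0 : 'cV[R]_n) f x).

(* Main.v *)
Require Import Defs.
From HB Require Import structures.
From mathcomp Require Import all_boot all_order all_algebra.
From mathcomp Require Import all_classical all_reals all_analysis.
From mathcomp Require Import ring lra.
Set Implicit Arguments. Unset Strict Implicit. Unset Printing Implicit Defensive.
Import Order.TTheory GRing.Theory Num.Theory.
Import numFieldNormedType.Exports.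
Local Open Scope ring_scope.
Definition ip (R : realType) (n : nat) (a b : 'cV[R]_n) : R := (a^T *m b) 0 0.

Lemma dir_ip (R : realType) (n : nat) (f : 'cV[R]_n -> R) x d :
  differentiable f x -> 'D_d f x = ip (grad f x) d.
Proof.
move=> df; rewrite deriveE // /ip /grad !mxE.
rewrite {1}(matrix_sum_delta d) linear_sum /=.
apply: eq_bigr => i _; rewrite big_ord1 linearZ /= !mxE -deriveE //.
by rewrite mulrC [ord0]ord1.
Qed.

Local Open Scope classical_set_scope.
Lemma at_right_dnbhs (R : realType) : (0:R)^'+ `=>` (0:R)^'.
Proof.
move=> A; rewrite /at_right /dnbhs /within /=.
by apply: filterS => y Hy yp; apply: Hy; rewrite gt_eqF.
Qed.

Lemma cvx_grad (R : realType) (n : nat) (f : 'cV[R]_n -> R) x d :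
  convex_fun f -> differentiable f x -> 'D_d f x <= f (x + d) - f x.
Proof.
move=> cf df.
have dv : derivable f x d := diff_derivable df.
rewrite /derive.
set q := (fun h : R => _).
have C : q @ 0^' --> lim (q @ 0^') by exact: dv.
have C' : q @ 0^'+ --> lim (q @ 0^').
  apply: cvg_trans C; apply: cvg_app; exact: at_right_dnbhs.
rewrite -(cvg_lim _ C') //.
apply: limr_le; first by apply/cvg_ex; eexists; exact: C'.
near=> h.
have h0 : 0 < h by near: h; exact: nbhs_right_gt.
have h1 : h <= 1 by near: h; exact: nbhs_right_le.
rewrite /q /= /shift.
have := cf x (x + d) h; rewrite h1 ltW //= => /(_ isT).
have -> : (1 - h) *: x + h *: (x + d) = h *: d + x.
  by rewrite scalerDr scalerBl scale1r addrA subrK addrC.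
move=> H.
have K : f (h*:d + x) - f x <= h * (f (x + d) - f x) by rewrite mulrBr; lra.
by rewrite [_ *: _]mulrC /= ler_pdivrMr // mulrC.
Unshelve. all: end_near.
Qed.
Lemma ipDl (R : realType) (n : nat) (a : 'cV[R]_n) (b : 'cV[R]_n) (c : 'cV[R]_n) : ip (a + b) c = ip a c + ip b c.
Proof. by rewrite /ip linearD /= mulmxDl mxE. Qed.
Lemma ipDr (R : realType) (n : nat) (a : 'cV[R]_n) (b : 'cV[R]_n) (c : 'cV[R]_n) : ip a (b + c) = ip a b + ip a c.
Proof. by rewrite /ip mulmxDr mxE. Qed.
Lemma ipNl (R : realType) (n : nat) (a : 'cV[R]_n) (c : 'cV[R]_n) : ip (- a) c = - ip a c.
Proof. by rewrite /ip linearN /= mulNmx mxE. Qed.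
Lemma ipNr (R : realType) (n : nat) (a : 'cV[R]_n) (c : 'cV[R]_n) : ip a (- c) = - ip a c.
Proof. by rewrite /ip mulmxN mxE. Qed.
Lemma ipBl (R : realType) (n : nat) (a : 'cV[R]_n) (b : 'cV[R]_n) (c : 'cV[R]_n) : ip (a - b) c = ip a c - ip b c.
Proof. by rewrite ipDl ipNl. Qed.
Lemma ipBr (R : realType) (n : nat) (a : 'cV[R]_n) (b : 'cV[R]_n) (c : 'cV[R]_n) : ip a (b - c) = ip a b - ip a c.
Proof. by rewrite ipDr ipNr. Qed.
Lemma ipZl (R : realType) (n : nat) (k : R) (a : 'cV[R]_n) (c : 'cV[R]_n) : ip (k *: a) c = k * ip a c.
Proof. by rewrite /ip linearZ /= -scalemxAl mxE. Qed.
Lemma ipZr (R : realType) (n : nat) (k : R) (a : 'cV[R]_n) (c : 'cV[R]_n) : ip a (k *: c) = k * ip a c.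
Proof. by rewrite /ip -scalemxAr mxE. Qed.
Lemma ipC (R : realType) (n : nat) (a : 'cV[R]_n) (b : 'cV[R]_n) : ip a b = ip b a.
Proof. rewrite /ip. rewrite -[b^T *m a]trmxK. by rewrite trmx_mul !trmxK !mxE. Qed.
Lemma ipMl (R : realType) (n : nat) (M : 'M[R]_n) (a : 'cV[R]_n) (b : 'cV[R]_n) : ip (M *m a) b = ip a (M^T *m b).
Proof. by rewrite /ip trmx_mul mulmxA. Qed.
Lemma ipMr (R : realType) (n : nat) (M : 'M[R]_n) (a : 'cV[R]_n) (b : 'cV[R]_n) : ip a (M *m b) = ip (M^T *m a) b.
Proof. by rewrite ipMl trmxK. Qed.
Lemma ip0l (R : realType) (n : nat) (a : 'cV[R]_n) : ip 0 a = 0.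
Proof. by rewrite /ip linear0 mul0mx mxE. Qed.
Lemma ip0r (R : realType) (n : nat) (a : 'cV[R]_n) : ip a 0 = 0.
Proof. by rewrite /ip mulmx0 mxE. Qed.
Lemma phi_derive (R : realType) (n : nat) (f : 'cV[R]_n -> R) (u d : 'cV[R]_n) (s : R) :
  derivable f (s *: d + u) d ->
  is_derive s 1 (fun s => f (s *: d + u)) ('D_d f (s *: d + u)).
Proof.
move=> df.
have E : (fun h : R => h^-1 *: (((fun s => f (s *: d + u)) \o shift s) (h *: 1) - f (s *: d + u)))
   = (fun h : R => h^-1 *: ((f \o shift (s *: d + u)) (h *: d) - f (s *: d + u))).
  by apply/funext => h /=; rewrite [h *: 1]mulr1 scalerDl addrA.
apply: DeriveDef; first by rewrite /derivable E.
by rewrite /derive E.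
Qed.

Lemma quad_derive (R : realType) (A B s : R) :
  is_derive s 1 (fun s : R => s * A + s ^+ 2 * B) (A + 2 * s * B).
Proof.
pose p : {poly R} := A *: 'X + B *: 'X^2.
have H := is_derive_poly p s.
have E : horner p = (fun s : R => s * A + s ^+ 2 * B).
  apply/funext => h; rewrite /p !hornerE /=; ring.
rewrite -E; apply: is_derive_eq H _.
rewrite /p derivD !derivZ derivX derivXn !hornerE /=; ring.
Qed.

Lemma descent (R : realType) (n : nat) (Q : 'M[R]_n) (f : 'cV[R]_n -> R) (L : R) :
  (forall v : 'cV[R]_n, differentiable f v) -> 0 < L ->
  (forall v w, ip (grad f v - grad f w) (v - w) <= L * ip (v - w) (Q *m (v - w))) ->
  forall u d, f (d + u) <= f u + ip (grad f u) d + L / 2 * ip d (Q *m d).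
Proof.
move=> Hd L0 Hm u d.
set A := ip (grad f u) d; set N := ip d (Q *m d); set B := L / 2 * N.
pose psi : R -> R := (fun s : R => f (s *: d + u)) - (fun s : R => s * A + s ^+ 2 * B).
have dpsi : forall s : R, is_derive s (1:R) psi (ip (grad f (s *: d + u)) d - (A + 2 * s * B)).
  move=> s.
  have h1 : derivable f (s *: d + u) d by exact: diff_derivable.
  have h2 := phi_derive h1.
  have h3 := quad_derive A B s.
  have h4 := is_deriveB h2 h3.
  apply: (is_derive_eq h4).
  by rewrite dir_ip.
have cpsi : {within `[0, 1], continuous psi}.
  apply: derivable_within_continuous => s _; by case: (dpsi s).
have [c cI E] := MVT ltr01 (fun s _ => dpsi s) cpsi.
move: cI; rewrite in_itv /= => /andP[c0 c1].
move: E; rewrite /psi !fctE scale1r scale0r add0r subr0 mulr1.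
have := Hm (c *: d + u) u; rewrite addrK ipZr ipBl -/A -scalemxAr !ipZl ipZr -/N.
move=> H1 E.
have H2 : ip (grad f (c *: d + u)) d - A <= L * c * N.
  have : c * (ip (grad f (c *: d + u)) d - A) <= c * (L * c * N) by nra.
  by rewrite ler_pM2l.
have e2 : 2 * c * (L / 2 * N) = L * c * N by field.
move: E; rewrite /B e2 expr1n expr0n /= !mul1r !mul0r => E.
rewrite /B; lra.
Qed.

Lemma amgm (R : realType) (n : nat) (Q P : 'M[R]_n) (L : R) (a d : 'cV[R]_n) :
  Q^T = Q -> Q *m P = 1%:M -> P *m Q = 1%:M -> (forall w, 0 <= ip w (P *m w)) ->
  2 * L * ip a d <= ip a (P *m a) + L^+2 * ip d (Q *m d).
Proof.
move=> QT QP PQ Pp.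
have := Pp (a - L *: (Q *m d)).
rewrite mulmxBr -scalemxAr mulmxA PQ mul1mx.
rewrite !(ipBl, ipBr, ipZl, ipZr) ipMl QT mulmxA QP mul1mx (ipC d a).
rewrite ipMl QT.
lra.
Qed.

Lemma keyI (R : realType) (n : nat) (Q P : 'M[R]_n) (f : 'cV[R]_n -> R) (L : R) :
  Q^T = Q -> P^T = P -> Q *m P = 1%:M -> 
  convex_fun f -> (forall v : 'cV[R]_n, differentiable f v) -> 0 < L ->
  (forall v w, ip (grad f v - grad f w) (v - w) <= L * ip (v - w) (Q *m (v - w))) ->
  forall x u, f x <= f u + ip (grad f x) (x - u)
     - ip (grad f x - grad f u) (P *m (grad f x - grad f u)) / (2 * L).
Proof.
move=> QT PT QP cf Hd L0 Hm x u.
set D := grad f x - grad f u.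
set M := ip D (P *m D).
set d := L^-1 *: (P *m D).
have C := cvx_grad (d + u - x) cf (Hd x).
rewrite dir_ip // subrKC in C.
have DL := descent Hd L0 Hm u d.
have E1 : ip (grad f u) d = ip (grad f x) d - L^-1 * M.
  by rewrite /M /d !ipZr /D ipBl; ring.
have E2 : ip d (Q *m d) = L^-1 * L^-1 * M.
  by rewrite /d ipZl -scalemxAr ipZr mulmxA QP mul1mx (ipC _ D) /M; ring.
have E3 : ip (grad f x) (d + u - x) = ip (grad f x) d - ip (grad f x) (x - u).
  by rewrite !ipBr ipDr; ring.
have e4 : L / 2 * (L^-1 * L^-1 * M) = M / (2 * L) by field; rewrite gt_eqF.
have e5 : L^-1 * M = 2 * (M / (2 * L)) by field; rewrite gt_eqF.
rewrite E3 in C; rewrite E1 E2 e4 in DL.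
lra.
Qed.

Lemma step (R : realType) (t th thp hk hk1 fs a b e M W Wn : R) :
 0 < t -> t <= 1 -> 1 <= th -> th^+2 - th <= thp^+2 -> fs <= hk1 -> 0 <= M ->
 hk <= hk1 + a - M -> hk <= fs + b - M -> (th - 1) * a + b = e ->
 Wn = W - th * e + t * th^+2 * M ->
 th^+2 * (hk - fs) + Wn <= thp^+2 * (hk1 - fs) + W.
Proof.
move=> t0 t1 th1 thr fh M0 hB hC he hW.
have h1 : (th - 1) * (hk - hk1 - a + M) <= 0.
  by rewrite mulr_ge0_le0 ?subr_ge0 //; lra.
have h2 : th * (hk - fs) <= (th - 1) * (hk1 - fs) + e - th * M.
  rewrite -he; nra.
have h3 : th * (th * (hk - fs)) <= th * ((th - 1) * (hk1 - fs) + e - th * M).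
  by rewrite ler_pM2l //; lra.
have h4 : (th^+2 - th) * (hk1 - fs) <= thp^+2 * (hk1 - fs).
  by apply: ler_wpM2r; lra.
have h5 : (t - 1) * (th^+2 * M) <= 0.
  by rewrite mulr_le0_ge0 ?mulr_ge0 ?sqr_ge0 //; lra.
rewrite hW; nra.
Qed.

Lemma pd_unit (R : realType) (n : nat) (Q : 'M[R]_n) : sym_posdef Q -> Q \in unitmx.
Proof.
move=> [QT pd]; rewrite -row_free_unit -kermx_eq0.
case/boolP: [exists i, row i (kermx Q) != 0] => [/existsP [i Hi] | /existsPn H].
  have := pd (row i (kermx Q))^T; rewrite trmx_eq0 Hi trmxK => /(_ isT).
  by rewrite -row_mul mulmx_ker row0 mul0mx mxE ltxx.
apply/eqP/matrixP => i j; have := H i; rewrite negbK => /eqP/rowP/(_ j).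
by rewrite !mxE.
Qed.

Lemma pd_ge0 (R : realType) (n : nat) (Q : 'M[R]_n) (x : 'cV[R]_n) :
  sym_posdef Q -> 0 <= (x^T *m Q *m x) 0 0.
Proof.
move=> [_ pd]; case: (eqVneq x 0) => [->|/pd/ltW //].
by rewrite mulmx0 mxE.
Qed.

Lemma sqrt_le_sq (R : realType) (X Y L : R) :
  0 <= X -> 0 <= Y -> 0 < L -> Num.sqrt X <= L * Num.sqrt Y -> X <= L^+2 * Y.
Proof.
move=> X0 Y0 L0 H.
have := sqr_sqrtr X0; have := sqr_sqrtr Y0; have := sqrtr_ge0 X; have := sqrtr_ge0 Y.
nra.
Qed.

Theorem corollary5 (R : realType) (n : nat) (Q : 'M[R]_n) (f : 'cV[R]_n -> R)
  (L t : R) (xs : 'cV[R]_n) (theta : nat -> R) (x y z : nat -> 'cV[R]_n) :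
  sym_posdef Q ->
  convex_fun f ->
  (forall v : 'cV[R]_n, differentiable f v) ->
  0 < L ->
  (forall u v : 'cV[R]_n,
      qdnorm Q (grad f u - grad f v) <= L * qnorm Q (u - v)) ->
  (forall v : 'cV[R]_n, f xs <= f v) ->
  0 < t <= 1 ->
  (forall k, 0 < theta k) ->
  theta 0%N = 1 ->
  (forall k, 0 <= theta k.+1 ^+ 2 - theta k.+1 <= theta k ^+ 2) ->
  z 0%N = x 0%N ->
  (forall k, y k.+1 = x k - L^-1 *: (invmx Q *m grad f (x k))) ->
  (forall k, z k.+1 = z k - (2 * t * theta k / L) *: (invmx Q *m grad f (x k))) ->
  (forall k, x k.+1 = (1 - (theta k.+1)^-1) *: y k.+1 + (theta k.+1)^-1 *: z k.+1) ->
  forall k : nat, (1 <= k)%N ->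
    f (y k) - f xs <= L * qnorm Q (x 0%N - xs) ^+ 2 / (4 * t * theta k.-1 ^+ 2).
Proof.
move=> [QT pd] cf Hd L0 Lip fmin /andP[t0 t1] thp th0 thr z0 yk zk xk k k1.
have spd : sym_posdef Q by [].
have Qu : Q \in unitmx := pd_unit spd.
have QP : Q *m invmx Q = 1%:M := mulmxV Qu.
have PQ : invmx Q *m Q = 1%:M := mulVmx Qu.
have PT : (invmx Q)^T = invmx Q by rewrite trmx_inv QT.
have Qp : forall v, 0 <= ip v (Q *m v).
  by move=> v; rewrite /ip mulmxA; exact: pd_ge0.
have Pp : forall w, 0 <= ip w (invmx Q *m w).
  move=> w; have {1}-> : w = Q *m (invmx Q *m w) by rewrite mulmxA QP mul1mx.
  by rewrite ipMl QT.
have Lip2 : forall u v, ip (grad f u - grad f v) (invmx Q *m (grad f u - grad f v))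
    <= L^+2 * ip (u - v) (Q *m (u - v)).
  move=> u v; have := Pp (grad f u - grad f v); have := Qp (u - v).
  rewrite /ip !mulmxA => H1 H2; apply: sqrt_le_sq => //.
  exact: Lip.
have Hm : forall v w, ip (grad f v - grad f w) (v - w) <= L * ip (v - w) (Q *m (v - w)).
  move=> v w.
  have := amgm L (grad f v - grad f w) (v - w) QT QP PQ Pp.
  have := Lip2 v w => H1 H2.
  have H3 : (2 * L) * ip (grad f v - grad f w) (v - w) <= (2 * L) * (L * ip (v - w) (Q *m (v - w))).
    nra.
  by rewrite ler_pM2l ?mulr_gt0 in H3.
have DL := descent Hd L0 Hm.
have KI := keyI QT PT QP cf Hd L0 Hm.
have L0' : L != 0 by rewrite gt_eqF.
have t0' : t != 0 by rewrite gt_eqF.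
have gs0 : grad f xs = 0.
  set gs := grad f xs.
  have Hv : gs = Q *m (invmx Q *m gs) by rewrite mulmxA QP mul1mx.
  case: (eqVneq gs 0) => // gs_nz; exfalso.
  have v_nz : invmx Q *m gs != 0.
    by apply: contra gs_nz => /eqP v0; rewrite Hv v0 mulmx0.
  have pos := pd _ v_nz.
  have HM : ip gs (invmx Q *m gs) = ip (invmx Q *m gs) (Q *m (invmx Q *m gs)).
    by rewrite {1}Hv ipMl QT.
  have := DL xs ((- L^-1) *: (invmx Q *m gs)).
  have := fmin ((- L^-1) *: (invmx Q *m gs) + xs).
  rewrite -scalemxAr ipZl !ipZr mulmxA QP mul1mx (ipC _ gs).
  move: pos; rewrite -mulmxA -/(ip _ _) -HM.
  set M := ip gs _ => pos H1 H2.
  have e : L / 2 * (- L^-1 * (- L^-1 * M)) = M / (2 * L) by field.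
  have e2 : - L^-1 * M = - 2 * (M / (2 * L)) by field.
  rewrite e e2 in H2.
  have : 0 < M / (2 * L) by rewrite divr_gt0 // mulr_gt0.
  lra.
pose g k := grad f (x k).
pose G k := ip (g k) (invmx Q *m g k).
pose h k := f (x k) - G k / (2 * L).
pose D k := ip (z k - xs) (Q *m (z k - xs)).
have G0 : forall k, 0 <= G k by move=> j; exact: Pp.
have thge1 : forall k, 1 <= theta k.
  case=> [|j]; first by rewrite th0.
  have := thp j.+1; have := thr j; case/andP => H _; nra.
have Ystep : forall k, f (y k.+1) <= h k.
  move=> j; rewrite yk.
  have -> : x j - L^-1 *: (invmx Q *m grad f (x j)) = (- L^-1) *: (invmx Q *m grad f (x j)) + x j.
    by rewrite scaleNr addrC.
  have := DL (x j) ((- L^-1) *: (invmx Q *m grad f (x j))).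
  rewrite -scalemxAr ipZl !ipZr mulmxA QP mul1mx (ipC _ (grad f (x j))) -/(g j) -/(G j).
  have e : L / 2 * (- L^-1 * (- L^-1 * G j)) = G j / (2 * L) by field.
  have e2 : - L^-1 * G j = - 2 * (G j / (2 * L)) by field.
  rewrite e e2 /h; lra.
have Hge : forall k, f xs <= h k.
  by move=> j; apply: le_trans (fmin _) (Ystep j).
have Dstep : forall k, L / (4 * t) * D k.+1
    = L / (4 * t) * D k - theta k * ip (g k) (z k - xs) + t * theta k ^+ 2 * (G k / L).
  move=> j; rewrite /D zk.
  have -> : z j - (2 * t * theta j / L) *: (invmx Q *m grad f (x j)) - xs
     = (z j - xs) - (2 * t * theta j / L) *: (invmx Q *m grad f (x j)) by rewrite addrAC.
  set e := z j - xs; clearbody e.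
  rewrite mulmxBr -scalemxAr mulmxA QP mul1mx.
  rewrite !(ipBl, ipBr, ipZl, ipZr) ipMl PT mulmxA PQ mul1mx.
  rewrite (ipC e (grad f (x j))) (ipC (invmx Q *m _)) -/(g j) -/(G j).
  field.
  by rewrite t0' L0'.
have Ck : forall k, h k <= f xs + ip (g k) (x k - xs) - G k / L.
  move=> j; have := KI (x j) xs; rewrite gs0 subr0 -/(g j) -/(G j).
  have e : G j / L = 2 * (G j / (2 * L)) by field.
  rewrite /h e; lra.
have Bstep : forall k, h k.+1 <= h k + ip (g k.+1) (x k.+1 - y k.+1) - G k.+1 / L.
  move=> j; have := KI (x j.+1) (x j); rewrite -/(g j.+1) -/(g j).
  rewrite yk -/(g j) mulmxBr !(ipBl, ipBr) -/(G j) -/(G j.+1) ipZr.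
  rewrite (ipMr _ (g j)) PT (ipC (invmx Q *m g j)).
  set q := ip (g j.+1) (invmx Q *m g j).
  have e : G j.+1 / L = 2 * (G j.+1 / (2 * L)) by field.
  have e2 : (G j.+1 - q - (q - G j)) / (2 * L) = G j.+1 / (2 * L) - L^-1 * q + G j / (2 * L) by field.
  rewrite /h e e2; lra.
have Comb : forall k, (theta k.+1 - 1) * ip (g k.+1) (x k.+1 - y k.+1)
    + ip (g k.+1) (x k.+1 - xs) = ip (g k.+1) (z k.+1 - xs).
  move=> j.
  have HX : forall gg, ip gg (x j.+1) = (1 - (theta j.+1)^-1) * ip gg (y j.+1)
      + (theta j.+1)^-1 * ip gg (z j.+1).
    by move=> gg; rewrite xk ipDr !ipZr.
  rewrite !ipBr HX.
  have thn : theta j.+1 != 0 by rewrite gt_eqF.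
  by field.
pose Psi k := theta k ^+ 2 * (h k - f xs) + L / (4 * t) * D k.+1.
have Pbound : forall k, Psi k <= L / (4 * t) * D 0%N.
  elim=> [|j IH].
    rewrite /Psi Dstep th0 expr1n mul1r mul1r.
    have := Ck 0%N; rewrite -z0.
    have : 0 <= G 0%N / L by rewrite divr_ge0 // ltW.
    nra.
  apply: le_trans IH; rewrite /Psi.
  have [_ thr2] := andP (thr j).
  apply: (step t0 t1 (thge1 j.+1) thr2 (Hge j) _ (Bstep j) (Ck j.+1) (Comb j) (Dstep j.+1)).
  by rewrite divr_ge0 // ltW.
case: k k1 => [|k'] // _ /=.
have eD : ((x 0%N - xs)^T *m Q *m (x 0%N - xs)) 0 0 = D 0%N by rewrite /D z0 /ip mulmxA.
rewrite /qnorm sqr_sqrtr; last exact: pd_ge0.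
rewrite eD.
have P1 := Pbound k'; have D1 : 0 <= D k'.+1 := Qp _; have Y := Ystep k'.
have thk := thp k'.
set th := theta k' in P1 thk *.
have th2 : 0 < th ^+ 2 by rewrite exprn_gt0.
have c0 : 0 <= L / (4 * t) * D k'.+1 by rewrite mulr_ge0 // divr_ge0 // ?ltW // mulr_gt0.
have A1 : th ^+ 2 * (f (y k'.+1) - f xs) <= L / (4 * t) * D 0%N.
  rewrite /Psi -/th in P1.
  have : th ^+ 2 * (f (y k'.+1) - f xs) <= th ^+ 2 * (h k' - f xs).
    by rewrite ler_pM2l //; lra.
  lra.
rewrite ler_pdivlMr; last by rewrite !mulr_gt0.
have A2 : (4 * t) * (th ^+ 2 * (f (y k'.+1) - f xs)) <= (4 * t) * (L / (4 * t) * D 0%N).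
  by rewrite ler_pM2l // mulr_gt0.
have e : (4 * t) * (L / (4 * t) * D 0%N) = L * D 0%N by field.
rewrite e in A2.
have e2 : (f (y k'.+1) - f xs) * (4 * t * th ^+ 2) = (4 * t) * (th ^+ 2 * (f (y k'.+1) - f xs)) by ring.
by rewrite e2.
Qed.
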